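(* Let $n>k\ge1$, $d\ge 2$, $J:=n-k-d+2\ge1$, and let $\mathcal{T}$ be a bipartite graph with $n$ variable nodes (VNs) and $n-k$ check nodes (CNs), whose CNs are partitioned into ''local'' CNs and ''global'' CNs such that (i) every local CN is adjacent to at least one VN that is not adjacent to any other local CN, and (ii) every global CN is adjacent to all $n$ VNs. If every set of $J$ local CNs is adjacent to at least $J+k$ VNs, then for every $\gamma\in[J,n-k]$ every set of $\gamma$ CNs of $\mathcal{T}$ is adjacent to at least $\gamma+k$ VNs; consequently, for all sufficiently large $q$ there is a matrix $\mathbf{H}\in\mathbb{F}_q^{(n-k)\times n}$ with Tanner graph $\mathcal{T}$ whose null space $\{\mathbf{y}:\mathbf{y}\mathbf{H}^T=\mathbf{0}\}$ has minimum distance at least $d$.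
   Context: The Tanner graph of $\mathbf{H}\in\mathbb{F}_q^{(n-k)\times n}$ has VNs $1,\dots,n$ and CNs $1,\dots,n-k$, with VN $i$ adjacent to CN $j$ iff $H_{j,i}\neq0$. $[a,b]=\{a,\dots,b\}$. *)

(* Defs.v *)
From HB Require Import structures.
From mathcomp Require Import all_boot all_order all_algebra.
Set Implicit Arguments. Unset Strict Implicit. Unset Printing Implicit Defensive.
Import GRing.Theory.
Local Open Scope ring_scope.

(* A bipartite graph with VNs 'I_n and CNs 'I_m is given by
   adj : 'I_m -> 'I_n -> bool, adj c v = "CN c adjacent to VN v". *)

Definition nbhd (m n : nat) (adj : 'I_m -> 'I_n -> bool) (S : {set 'I_m})
  : {set 'I_n} := [set v | [exists c in S, adj c v]].

Definition has_tanner_graph (F : fieldType) (m n : nat)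
  (H : 'M[F]_(m, n)) (adj : 'I_m -> 'I_n -> bool) : Prop :=
  forall (j : 'I_m) (i : 'I_n), (H j i != 0) = adj j i.

Definition hwt (F : fieldType) (n : nat) (y : 'rV[F]_n) : nat :=
  #|[set i : 'I_n | y 0 i != 0]|.

Definition nullspace_min_dist_ge (F : fieldType) (m n : nat)
  (H : 'M[F]_(m, n)) (d : nat) : Prop :=
  forall y : 'rV[F]_n, y *m H^T = 0 -> y != 0 -> (d <= hwt y)%N.

(* Main.v *)
Require Import Defs.
From HB Require Import structures.
From mathcomp Require Import all_boot all_order all_algebra.
From mathcomp Require Import fingroup perm zify.
Set Implicit Arguments. Unset Strict Implicit. Unset Printing Implicit Defensive.
Import GRing.Theory.

Section Hall.
Variables (I J : finType) (e : J -> I -> bool) (j0 : J).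
Definition NR (R : {set J}) (U : {set I}) := [set j in R | [exists i in U, e j i]].

Lemma NR_sub R U : NR R U \subset R.
Proof. by apply/subsetP => j; rewrite inE => /andP[]. Qed.

Lemma hall N : forall (T : {set I}) (R : {set J}), #|T| < N ->
 (forall U : {set I}, U \subset T -> #|U| <= #|NR R U|) ->
 exists f : I -> J, (forall i, i \in T -> (f i \in R) && e (f i) i) /\ {in T &, injective f}.
Proof.
elim: N => [//|N IH] T R HT Hall.
case: (set_0Vmem T) => [-> | [i0 Ti0]].
  by exists (fun _ => j0); split => // i; rewrite inE.
case: (boolP [exists U : {set I}, [&& U != set0, U \proper T & #|NR R U| <= #|U|]]).
- case/existsP => U0 /and3P [U0n0 U0T cardU0].
  have sU0T := proper_sub U0T.
  have [f1 [Hf1 If1]] : exists f : I -> J, (forall i, i \in U0 -> (f i \in R) && e (f i) i) /\ {in U0 &, injective f}.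
    apply: IH; first by have := proper_card U0T; lia.
    by move=> U sU; apply: Hall; apply: subset_trans sU sU0T.
  set N0 := NR R U0.
  have eqN0 : #|N0| = #|U0| by have := Hall _ sU0T; rewrite /N0; lia.
  have [f2 [Hf2 If2]] : exists f : I -> J, (forall i, i \in T :\: U0 -> (f i \in R :\: N0) && e (f i) i) /\ {in T :\: U0 &, injective f}.
    apply: IH.
      rewrite cardsD (setIidPr sU0T).
      have : 0 < #|U0| by rewrite card_gt0.
      have := subset_leq_card sU0T. lia.
    move=> U sU.
    have sUU0 : U :|: U0 \subset T.
      by rewrite subUset sU0T andbT; apply: subset_trans sU (subsetDl _ _).
    have H1 := Hall _ sUU0.
    have dis : U :&: U0 = set0.
      apply/setP => x; rewrite !inE; apply/andP => -[xU xU0].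
      by move/subsetP: sU => /(_ _ xU); rewrite inE xU0.
    rewrite cardsU dis cards0 in H1.
    have sub : NR R (U :|: U0) \subset NR (R :\: N0) U :|: N0.
      apply/subsetP => j; rewrite !inE => /andP[jR /existsP[i /andP[]]].
      rewrite inE => /orP[iU eji | iU0 eji].
        rewrite jR /= andbT; case: existsP => //= _; rewrite orbF.
        by apply/existsP; exists i; rewrite iU.
      rewrite jR /=; apply/orP; right; apply/existsP; exists i; by rewrite iU0.
    have := subset_leq_card sub. rewrite cardsU. lia.
  exists (fun i => if i \in U0 then f1 i else f2 i); split.
    move=> i iT; case: ifP => iU0; first exact: Hf1.
    by have := Hf2 i; rewrite !inE iU0 iT => /(_ isT) /andP[/andP[_ ->] ->].
  have f1N0 : forall x, x \in U0 -> f1 x \in N0.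
    move=> x xU0; have /andP[xR ex] := Hf1 x xU0; rewrite inE xR /=.
    by apply/existsP; exists x; rewrite xU0.
  have f2N0 : forall y, y \in T -> y \notin U0 -> f2 y \notin N0.
    move=> y yT yU0; have := Hf2 y; rewrite in_setD yU0 yT => /(_ isT) /andP[].
    by rewrite in_setD => /andP[].
  move=> x y xT yT /=.
  case: ifP => xU0; case: ifP => yU0.
  + exact: If1.
  + move=> E; have := f2N0 y yT; rewrite yU0 -E f1N0 //; by move/(_ isT).
  + move=> E; have := f2N0 x xT; rewrite xU0 E f1N0 //; by move/(_ isT).
  + by apply: If2; rewrite in_setD ?xU0 ?yU0 ?xT ?yT.
- move=> Hno.
  have strict : forall U, U != set0 -> U \proper T -> #|U| < #|NR R U|.
    move=> U U0 UT; rewrite ltnNge; apply/negP => Hle.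
    by move/negP: Hno; apply; apply/existsP; exists U; rewrite U0 UT Hle.
  have := Hall [set i0]; rewrite sub1set Ti0 cards1 => /(_ isT).
  rewrite card_gt0 => /set0Pn [j]; rewrite inE => /andP[jR /existsP[i1 /andP[]]].
  rewrite inE => /eqP -> eji0.
  have [f' [Hf' If']] : exists f : I -> J, (forall i, i \in T :\ i0 -> (f i \in R :\ j) && e (f i) i) /\ {in T :\ i0 &, injective f}.
    apply: IH.
      by move: HT; rewrite (cardsD1 i0 T) Ti0; lia.
    move=> U sU.
    case: (eqVneq U set0) => [-> | Un0]; first by rewrite cards0.
    have pU : U \proper T.
      apply/properP; split; first by apply: subset_trans sU (subsetDl _ _).
      exists i0 => //; apply/negP => /(subsetP sU); by rewrite !inE eqxx.
    have := strict U Un0 pU.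
    have sub : NR R U \subset j |: NR (R :\ j) U.
      apply/subsetP => x; rewrite !inE => /andP[xR ->]; rewrite xR andbT.
      by case: (x == j).
    have := subset_leq_card sub. rewrite cardsU1. lia.
  exists (fun i => if i == i0 then j else f' i); split.
    move=> i iT; case: eqP => [-> | /eqP ni0]; first by rewrite jR.
    by have := Hf' i; rewrite !inE ni0 iT => /(_ isT) /andP[/andP[_ ->] ->].
  move=> x y xT yT /=.
  case: eqP => [-> | /eqP nx]; case: eqP => [-> | /eqP ny] //.
  + move=> E; have := Hf' y; rewrite !inE ny yT => /(_ isT).
    by rewrite -E eqxx.
  + move=> E; have := Hf' x; rewrite !inE nx xT => /(_ isT).
    by rewrite E eqxx.
  + by apply: If'; rewrite !inE ?nx ?ny ?xT ?yT.
Qed.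
End Hall.

Close Scope ring_scope.
Lemma bits_bound N (a : nat -> bool) : (\sum_(c < N) a c * 2 ^ c < 2 ^ N)%N.
Proof.
elim: N => [|N IH]; first by rewrite big_ord0.
rewrite big_ord_recr /= expnS.
have : (a N * 2 ^ N <= 2 ^ N)%N by case: (a N); rewrite ?mul1n ?mul0n.
move: IH; move: (\sum_(c < N) _)%N (a N * 2 ^ N)%N (2 ^ N)%N => x y z; lia.
Qed.

Lemma bits_inj N (a b : nat -> bool) :
  \sum_(c < N) a c * 2 ^ c = \sum_(c < N) b c * 2 ^ c ->
  forall c, (c < N)%N -> a c = b c.
Proof.
elim: N => [//|N IH]; rewrite !big_ord_recr /= => E.
have Ba := bits_bound N a; have Bb := bits_bound N b.
have eN : a N = b N.
  move: E Ba Bb; case: (a N); case: (b N) => //=; rewrite ?mul1n ?mul0n;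
  move: (\sum_(c < N) a c * _)%N (\sum_(c < N) b c * _)%N (2 ^ N)%N => x y z; lia.
move=> c; rewrite ltnS leq_eqVlt => /orP[/eqP -> // | hc].
apply: IH => //; move: E; rewrite eN; apply: addIn.
Qed.

Lemma pow2_set_inj N (A B : {set 'I_N}) :
  \sum_(c in A) 2 ^ c = \sum_(c in B) 2 ^ c -> A = B.
Proof.
pose a (S : {set 'I_N}) x := x \in [seq val c | c <- enum S].
have conv : forall S : {set 'I_N}, \sum_(c in S) 2 ^ c = \sum_(c < N) a S c * 2 ^ c.
  move=> S; rewrite big_mkcond; apply: eq_bigr => c _.
  by rewrite /a (mem_map val_inj) mem_enum; case: (c \in S); rewrite ?mul1n ?mul0n.
rewrite !conv => E; apply/setP => c.
by have := bits_inj E (ltn_ord c); rewrite /a !(mem_map val_inj) !mem_enum.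
Qed.

Open Scope ring_scope.

Section Gen.
Variables (F : fieldType) (m n : nat) (adj : 'I_m -> 'I_n -> bool).
Definition NN := #|{: 'I_m * 'I_n}|.
Definition wt (j : 'I_m) (i : 'I_n) : nat := 2 ^ (enum_rank (j, i) : nat).
Definition Hm (t : F) : 'M[F]_(m,n) := \matrix_(j,i) if adj j i then t ^+ wt j i else 0.
Definition Bm (t : F) (T : {set 'I_n}) (f : 'I_n -> 'I_m) : 'M[F]_n :=
  \matrix_(i, i') if (i \in T) && (i' \in T) then Hm t (f i) i' else (i == i')%:R.
Definition validb (T : {set 'I_n}) (f : 'I_n -> 'I_m) (s : 'S_n) : bool :=
  [forall i, if i \in T then (s i \in T) && adj (f i) (s i) else s i == i].
Definition ex (T : {set 'I_n}) (f : 'I_n -> 'I_m) (s : 'S_n) : nat := (\sum_(i in T) wt (f i) (s i))%N.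
Definition Pp (T : {set 'I_n}) (f : 'I_n -> 'I_m) : {poly F} := \sum_(s : 'S_n | validb T f s) ((-1) ^+ s) *: 'X^(ex T f s).

Implicit Types (T : {set 'I_n}) (f : 'I_n -> 'I_m) (s : 'S_n).

Lemma prod_cond (I : finType) (a : I -> bool) (g : I -> nat) (x : F) :
  \prod_i (if a i then x ^+ g i else 0) = if [forall i, a i] then x ^+ (\sum_i g i)%N else 0.
Proof.
case: forallP => [Ha | Hn].
  rewrite -prodrXr; apply: eq_bigr => i _; by rewrite Ha.
have [i Hi] : exists i, ~~ a i.
  case: (pickP (fun i => ~~ a i)) => [i Hi|H]; first by exists i.
  by exfalso; apply: Hn => i; have := H i => /= /negbFE.
by rewrite (bigD1 i) //= (negbTE Hi) mul0r.
Qed.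

Lemma det_B t T f : \det (Bm t T f) = (Pp T f).[t].
Proof.
rewrite /determinant /Pp horner_sum [RHS]big_mkcond /=.
apply: eq_bigr => s _; rewrite hornerZ hornerXn.
have -> : \prod_i Bm t T f i (s i) =
  \prod_i (if (if i \in T then (s i \in T) && adj (f i) (s i) else s i == i)
           then t ^+ (if i \in T then wt (f i) (s i) else 0%N) else 0).
  apply: eq_bigr => i _; rewrite !mxE.
  case iT: (i \in T) => /=.
    case siT: (s i \in T) => /=; first by [].
    case: eqP => // E; move: siT; by rewrite -E iT.
  by rewrite eq_sym; case: eqP; rewrite ?expr0.
rewrite prod_cond -big_mkcond /= /validb /ex.
by case: forallP; rewrite ?mulr0.
Qed.

Lemma coefP T f j : (Pp T f)`_j = \sum_(s | validb T f s) (-1) ^+ s * (j == ex T f s)%:R.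
Proof. by rewrite coef_sum; apply: eq_bigr => s _; rewrite coefZ coefXn. Qed.

Lemma ex_inj T f s : {in T &, injective f} -> validb T f s -> ex T f s = ex T f 1 -> s = 1%g.
Proof.
move=> injf vs.
pose E (s : 'S_n) := [set (enum_rank (f i, s i)) | i in T].
have exE : forall s : 'S_n, ex T f s = (\sum_(c in E s) 2 ^ c)%N.
  move=> s'; rewrite big_imset //= => x y _ _ /enum_rank_inj [_ /perm_inj].
  done.
rewrite !exE => /pow2_set_inj EE.
apply/permP => i; rewrite perm1.
have := forallP vs i; case iT: (i \in T) => /=; last by move/eqP.
move=> _.
have : enum_rank (f i, s i) \in E 1%g by rewrite -EE; apply: imset_f.
case/imsetP => i' i'T /enum_rank_inj [E1 E2].
rewrite perm1 in E2; rewrite E2; apply: injf => //; by rewrite E2.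
Qed.

Lemma valid1 T f : (forall i, i \in T -> adj (f i) i) -> validb T f 1.
Proof.
move=> H; apply/forallP => i; rewrite perm1.
by case iT: (i \in T); rewrite ?iT ?H.
Qed.

Lemma Pp_coef1 T f : {in T &, injective f} -> (forall i, i \in T -> adj (f i) i) ->
  (Pp T f)`_(ex T f 1) = 1.
Proof.
move=> injf adjf; rewrite coefP (bigD1 1%g) ?valid1 //= perm.odd_perm1 expr0 mul1r eqxx /=.
rewrite big1 ?addr0 // => s /andP[vs ns].
case: eqP => [E|_]; last by rewrite mulr0.
by move: ns; rewrite (ex_inj injf vs (esym E)) eqxx.
Qed.

Lemma Pp_neq0 T f : {in T &, injective f} -> (forall i, i \in T -> adj (f i) i) -> Pp T f != 0.
Proof.
move=> injf adjf; apply/eqP => E.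
by have := Pp_coef1 injf adjf; rewrite E coef0 => /eqP; rewrite eq_sym oner_eq0.
Qed.

Lemma Pp_size T f : (size (Pp T f) <= n * 2 ^ NN + 1)%N.
Proof.
apply/leq_sizeP => j hj; rewrite coefP big1 // => s _.
suff : (ex T f s < j)%N by case: eqP => [->|_]; rewrite ?ltnn ?mulr0.
have : (ex T f s <= n * 2 ^ NN)%N.
  apply: (@leq_trans (\sum_(i in T) 2 ^ NN)%N).
    apply: leq_sum => i _; apply: leq_pexp2l => //; apply: ltnW; exact: ltn_ord.
  rewrite sum_nat_const leq_mul2r; apply/orP; right.
  by have := max_card T; rewrite card_ord.
lia.
Qed.

End Gen.

Close Scope ring_scope.
Lemma part1 (n k d : nat)
  (adj : 'I_(n - k) -> 'I_n -> bool) (loc : {set 'I_(n - k)}) :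
  (k < n)%N -> (1 <= (n - k + 2) - d)%N ->
  (forall c, c \in loc ->
     exists v : 'I_n, adj c v && [forall c' in loc, (c' != c) ==> ~~ adj c' v]) ->
  (forall c, c \notin loc -> forall v : 'I_n, adj c v) ->
  (forall S : {set 'I_(n - k)}, S \subset loc -> #|S| = ((n - k + 2) - d)%N ->
     (#|S| + k <= #|nbhd adj S|)%N) ->
  (forall gamma : nat, ((n - k + 2) - d <= gamma)%N -> (gamma <= n - k)%N ->
     forall S : {set 'I_(n - k)}, #|S| = gamma -> (gamma + k <= #|nbhd adj S|)%N).
Proof.
move=> kn J1 priv glob HJ gamma g1 g2 S cS.
have loc_ind : forall N (S : {set 'I_(n - k)}), (#|S| < N)%N -> S \subset loc ->
    ((n - k + 2) - d <= #|S|)%N -> (#|S| + k <= #|nbhd adj S|)%N.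
  elim=> [//|N IH] S' cN sl cJ.
  case: (eqVneq #|S'| ((n - k + 2) - d)%N) => [E|NE]; first exact: HJ.
  have : (0 < #|S'|)%N by lia.
  rewrite card_gt0 => /set0Pn [c cS'].
  have := IH (S' :\ c).
  rewrite (cardsD1 c S') cS' in cN cJ NE *.
  have sl' : S' :\ c \subset loc by apply: subset_trans sl; apply: subsetDl.
  move=> /(_ _ sl' _) H; have {H} H := H ltac:(lia) ltac:(lia).
  have [v /andP[acv pv]] := priv c (subsetP sl c cS').
  have pr : nbhd adj (S' :\ c) \proper nbhd adj S'.
    apply/properP; split.
      apply/subsetP => x; rewrite !inE => /existsP[c' /andP[]].
      rewrite !inE => /andP[_ c'S] a; apply/existsP; exists c'; by rewrite c'S.
    exists v; first by rewrite inE; apply/existsP; exists c; rewrite cS' acv.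
    rewrite inE; apply/negP => /existsP[c' /andP[]]; rewrite !inE => /andP[nc c'S].
    move/forallP: pv => /(_ c'); rewrite (subsetP sl c' c'S) nc /= => /negbTE ->.
    done.
  have := proper_card pr; lia.
case: (boolP (S \subset loc)) => sl.
  by rewrite -cS; apply: (loc_ind #|S|.+1) => //; lia.
have [c cS' cnl] : exists2 c, c \in S & c \notin loc.
  case: (pickP (fun c => (c \in S) && (c \notin loc))) => [c /andP[]|H]; first by exists c.
  exfalso; move/negP: sl; apply; apply/subsetP => c cS'.
  by have := H c; rewrite cS' /= => /negbFE.
have -> : nbhd adj S = setT.
  apply/setP => v; rewrite !inE; apply/existsP; exists c; by rewrite cS' glob.
rewrite cardsT card_ord; lia.
Qed.

Open Scope ring_scope.

Lemma exists_nonroot (F : finFieldType) (p : {poly F}) :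
  p != 0 -> (size p <= #|F|)%N -> exists t, ~~ root p t.
Proof.
move=> p0 sp.
case: (pickP (fun t => ~~ root p t)) => [t Ht|H]; first by exists t.
have := max_poly_roots p0 (rs := enum F).
rewrite enum_uniq -cardE.
have -> : all (root p) (enum F) by apply/allP => x _; have := H x => /= /negbFE.
move=> /(_ isT isT); by rewrite ltnNge sp.
Qed.

Definition matchb (m n : nat) (adj : 'I_m -> 'I_n -> bool) (T : {set 'I_n})
  (f : {ffun 'I_n -> 'I_m}) : bool :=
  [forall i in T, adj (f i) i] && [forall i in T, forall i' in T, (f i == f i') ==> (i == i')].

Definition PT (F : fieldType) (m n : nat) (adj : 'I_m -> 'I_n -> bool) (T : {set 'I_n}) : {poly F} :=
  if [pick f | matchb adj T f] is Some f then @Pp F m n adj T f else 1.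

Lemma PT_neq0 (F : fieldType) m n adj T : @PT F m n adj T != 0.
Proof.
rewrite /PT; case: pickP => [f /andP[/forallP H1 /forallP H2] | _]; last exact: oner_neq0.
apply: Pp_neq0.
  move=> x y xT yT E; have := H2 x; rewrite xT /= => /forallP /(_ y).
  by rewrite yT E eqxx /= => /eqP.
by move=> i iT; have := H1 i; rewrite iT.
Qed.

Lemma PT_size (F : fieldType) m n adj T : (size (@PT F m n adj T) <= n * 2 ^ NN m n + 1)%N.
Proof.
rewrite /PT; case: pickP => [f _|_]; first exact: Pp_size.
rewrite size_poly1; lia.
Qed.

Unset Implicit Arguments.
Theorem corollary1 (n k d : nat)
  (adj : 'I_(n - k) -> 'I_n -> bool) (loc : {set 'I_(n - k)}) :
  (k < n)%N -> (1 <= k)%N -> (2 <= d)%N -> (1 <= (n - k + 2) - d)%N ->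
  (forall c, c \in loc ->
     exists v : 'I_n, adj c v && [forall c' in loc, (c' != c) ==> ~~ adj c' v]) ->
  (forall c, c \notin loc -> forall v : 'I_n, adj c v) ->
  (forall S : {set 'I_(n - k)}, S \subset loc -> #|S| = ((n - k + 2) - d)%N ->
     (#|S| + k <= #|nbhd adj S|)%N) ->
  (forall gamma : nat, ((n - k + 2) - d <= gamma)%N -> (gamma <= n - k)%N ->
     forall S : {set 'I_(n - k)}, #|S| = gamma -> (gamma + k <= #|nbhd adj S|)%N)
  /\
  (exists Q : nat, forall F : finFieldType, (Q <= #|F|)%N ->
     exists H : 'M[F]_(n - k, n),
       has_tanner_graph H adj /\ nullspace_min_dist_ge H d).
Proof.
move=> kn k1 d2 J1 priv glob HJ.
have P1 := part1 kn J1 priv glob HJ.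
split; first exact: P1.
pose D := (n * 2 ^ NN (n-k) n + 1)%N.
exists (#|{: {set 'I_n}}| * D + 2)%N => F QF.
pose Pall : {poly F} := 'X * \prod_(T : {set 'I_n}) @PT F _ _ adj T.
have Pall0 : Pall != 0.
  by rewrite mulf_neq0 ?polyX_eq0 //; apply/prodf_neq0 => T _; exact: PT_neq0.
have sPall : (size Pall <= #|F|)%N.
  apply: leq_trans QF; apply: (leq_trans (size_polyMleq _ _)); rewrite size_polyX.
  have h := @size_poly_prod_leq F _ xpredT (fun T : {set 'I_n} => @PT F _ _ adj T).
  have h2 : (\sum_(T : {set 'I_n}) size (@PT F _ _ adj T) <= #|{: {set 'I_n}}| * D)%N.
    apply: (@leq_trans (\sum_(T : {set 'I_n}) D)%N).
      by apply: leq_sum => T _; exact: PT_size.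
    by rewrite sum_nat_const.
  have hs := leq_trans h (leq_subr _ _).
  change (2%R : nat) with 2%N.
  move: hs h2; move: (\sum_(T : {set 'I_n}) _)%N (#|{: {set 'I_n}}| * D)%N => a b.
  move: (size _) => c; lia.
have [t Ht] := exists_nonroot Pall0 sPall.
move: Ht; rewrite /root hornerM hornerX mulf_eq0 negb_or => /andP[t0 Hprod].
have HT : forall T, (@PT F _ _ adj T).[t] != 0.
  move=> T; move: Hprod; rewrite horner_prod => /prodf_neq0 /(_ T isT). done.
exists (Hm adj t); split.
  move=> j i; rewrite mxE; case: (adj j i); [by rewrite expf_neq0 | by rewrite eqxx].
move=> y yH y0; rewrite leqNgt; apply/negP => hlt.
pose T := [set i | y 0 i != 0].
have cT : (#|T| < d)%N by [].
have m0 : (0 < n - k)%N by lia.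
pose j0 : 'I_(n-k) := Ordinal m0.
have Hhall : forall U : {set 'I_n}, U \subset T -> (#|U| <= #|NR adj setT U|)%N.
  move=> U sU; rewrite leqNgt; apply/negP => lt.
  pose Sc := ~: NR adj setT U.
  have cSc : (#|NR adj setT U| + #|Sc| = n - k)%N by rewrite cardsC card_ord.
  have cU : (#|U| <= #|T|)%N := subset_leq_card sU.
  have cUn : (#|U| <= n)%N by have := max_card U; rewrite card_ord.
  have := P1 #|Sc| ltac:(lia) ltac:(lia) Sc erefl.
  have sub : nbhd adj Sc \subset ~: U.
    apply/subsetP => v; rewrite !inE => /existsP [c /andP[]]; rewrite !inE => cn acv.
    apply/negP => vU; move/negP: cn; apply; apply/existsP; exists v; by rewrite vU.
  have := subset_leq_card sub; have := cardsC U; rewrite card_ord.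
  lia.
have [f [Hf If]] := @hall _ _ adj j0 #|T|.+1 T setT (ltnSn _) Hhall.
have mt : matchb adj T (finfun f).
  apply/andP; split; apply/forallP => i; apply/implyP => iT; rewrite ffunE.
    by have /andP[_ ->] := Hf i iT.
  apply/forallP => i'; apply/implyP => i'T; rewrite ffunE; apply/implyP => /eqP E.
  by rewrite (If _ _ iT i'T E).
move: (HT T); rewrite /PT; case: pickP => [g _ | /(_ (finfun f))]; last by rewrite mt.
rewrite -det_B => detB.
have unitB : (Bm adj t T g)^T \in unitmx by rewrite unitmxE det_tr unitfE.
have yB : y *m (Bm adj t T g)^T = 0.
  apply/rowP => i; rewrite !mxE.
  case iT: (i \in T).
  - have := congr1 (fun M : 'M[F]_(1, n - k) => M 0 (g i)) yH; rewrite !mxE => E; apply: eq_trans E.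
    apply: eq_bigr => i' _; rewrite !mxE iT /=.
    case i'T: (i' \in T) => //.
    have -> : y 0 i' = 0 by move: i'T; rewrite inE => /negbFE/eqP.
    by rewrite !mul0r.
  - rewrite (bigD1 i) //= !mxE iT /= eqxx mulr1.
    have -> : y 0 i = 0 by move: iT; rewrite inE => /negbFE/eqP.
    rewrite add0r big1 // => i' ni'; by rewrite !mxE iT /= eq_sym (negbTE ni') mulr0.
have : y = 0 by rewrite -(mulmxK unitB y) yB mul0mx.
by move/eqP: y0.
Qed.
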